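(* Let $\underline\phi\le\overline\phi$ and $\underline\psi\le\overline\psi$ be functions on $[0,1]$ satisfying (P1)–(P3). Then the pair $(C^{\mathrm M}_{\underline\phi,\underline\psi},C^{\mathrm M}_{\overline\phi,\overline\psi})$ is an imprecise copula which is coherent, i.e. with $\mathcal C=\{C: C \text{ a copula}, C^{\mathrm M}_{\underline\phi,\underline\psi}\le C\le C^{\mathrm M}_{\overline\phi,\overline\psi}\}$ one has $C^{\mathrm M}_{\underline\phi,\underline\psi}=\inf_{C\in\mathcal C}C$ and $C^{\mathrm M}_{\overline\phi,\overline\psi}=\sup_{C\in\mathcal C}C$ pointwise.
   Context: (P1) $\phi,\psi$ non-decreasing; (P2) $\phi(0)=\psi(0)=0$, $\phi(1)=\psi(1)=1$; (P3) $\phi(u)/u$, $\psi(v)/v$ non-increasing on $(0,1]$. $C^{\mathrm M}_{\phi,\psi}(u,v)=uv\min\{\phi(u)/u,\psi(v)/v\}$ for $uv>0$ and $0$ otherwise. A copula is $C:[0,1]^2\to[0,1]$ with $C(u,0)=C(0,v)=0$, $C(u,1)=u$, $C(1,v)=v$, and $C(u_2,v_2)-C(u_1,v_2)-C(u_2,v_1)+C(u_1,v_1)\ge0$ for $u_1\le u_2$, $v_1\le v_2$. An imprecise copula is a pair $(\underline C,\overline C)$ of maps $[0,1]^2\to[0,1]$ both satisfying the boundary conditions of a copula and, for all $u_1\le u_2$, $v_1\le v_2$: $\underline C(u_2,v_2)+\overline C(u_1,v_1)-\underline C(u_2,v_1)-\underline C(u_1,v_2)\ge0$; $\overline C(u_2,v_2)+\underline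 C(u_1,v_1)-\underline C(u_2,v_1)-\underline C(u_1,v_2)\ge0$; $\overline C(u_2,v_2)+\overline C(u_1,v_1)-\overline C(u_2,v_1)-\underline C(u_1,v_2)\ge0$; $\overline C(u_2,v_2)+\overline C(u_1,v_1)-\underline C(u_2,v_1)-\overline C(u_1,v_2)\ge0$. *)

(* Defs.v *)
(* functions on [0,1] are modelled as R -> R (resp. R -> R -> R),
   with all conditions imposed on [0,1] (resp. [0,1]^2). *)
From Stdlib Require Import Reals.
Open Scope R_scope.

Definition in01 (x : R) : Prop := 0 <= x <= 1.

Definition P1 (f : R -> R) : Prop :=
  forall x y, in01 x -> in01 y -> x <= y -> f x <= f y.
Definition P2 (f : R -> R) : Prop := f 0 = 0 /\ f 1 = 1.
Definition P3 (f : R -> R) : Prop :=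
  forall x y, 0 < x -> x <= y -> y <= 1 -> f y / y <= f x / x.

Definition admissible (f : R -> R) : Prop := P1 f /\ P2 f /\ P3 f.

Definition CM (phi psi : R -> R) (u v : R) : R :=
  if Rlt_dec 0 (u * v) then u * v * Rmin (phi u / u) (psi v / v) else 0.

Definition boundary (C : R -> R -> R) : Prop :=
  (forall u v, in01 u -> in01 v -> 0 <= C u v <= 1) /\
  (forall u, in01 u -> C u 0 = 0 /\ C 0 u = 0 /\ C u 1 = u /\ C 1 u = u).

Definition is_copula (C : R -> R -> R) : Prop :=
  boundary C /\
  forall u1 u2 v1 v2, in01 u1 -> in01 u2 -> in01 v1 -> in01 v2 ->
    u1 <= u2 -> v1 <= v2 ->
    C u2 v2 - C u1 v2 - C u2 v1 + C u1 v1 >= 0.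

Definition is_imprecise_copula (Cl Cu : R -> R -> R) : Prop :=
  boundary Cl /\ boundary Cu /\
  forall u1 u2 v1 v2, in01 u1 -> in01 u2 -> in01 v1 -> in01 v2 ->
    u1 <= u2 -> v1 <= v2 ->
    Cl u2 v2 + Cu u1 v1 - Cl u2 v1 - Cl u1 v2 >= 0 /\
    Cu u2 v2 + Cl u1 v1 - Cl u2 v1 - Cl u1 v2 >= 0 /\
    Cu u2 v2 + Cu u1 v1 - Cu u2 v1 - Cl u1 v2 >= 0 /\
    Cu u2 v2 + Cu u1 v1 - Cl u2 v1 - Cu u1 v2 >= 0.

Definition is_inf (S : R -> Prop) (x : R) : Prop :=
  (forall y, S y -> x <= y) /\ (forall b, (forall y, S y -> b <= y) -> b <= x).
Definition is_sup (S : R -> Prop) (x : R) : Prop :=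
  (forall y, S y -> y <= x) /\ (forall b, (forall y, S y -> y <= b) -> x <= b).

Definition between (Cl Cu C : R -> R -> R) : Prop :=
  is_copula C /\
  forall u v, in01 u -> in01 v -> Cl u v <= C u v /\ C u v <= Cu u v.

Definition coherent (Cl Cu : R -> R -> R) : Prop :=
  forall u v, in01 u -> in01 v ->
    is_inf (fun y => exists C, between Cl Cu C /\ y = C u v) (Cl u v) /\
    is_sup (fun y => exists C, between Cl Cu C /\ y = C u v) (Cu u v).

(* Main.v *)
Require Import Defs.
From Stdlib Require Import Reals Lra Psatz.
Open Scope R_scope.
Lemma key u1 u2 v1 v2 F1 F2 G1 G2 : 0<=u1 -> u1<=u2 -> 0<=v1 -> v1<=v2 -> 0<=F1 -> F1<=F2 -> 0<=G1 -> G1<=G2 ->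
 u1*F2 <= u2*F1 -> v1*G2 <= v2*G1 ->
 Rmin (v2*F2) (u2*G2) - Rmin (v2*F1) (u1*G2) - Rmin (v1*F2) (u2*G1) + Rmin (v1*F1) (u1*G1) >= 0.
Proof.
intros.
assert (P1 : 0 <= u1*(v2*G1 - v1*G2)) by nra.
assert (P2 : 0 <= v1*(u2*F1 - u1*F2)) by nra.
assert (P3 : 0 <= (v2-v1)*v1*(F2-F1)) by (apply Rmult_le_pos; nra).
assert (P4 : 0 <= (u2-u1)*u1*(G2-G1)) by (apply Rmult_le_pos; nra).
assert (P5 : 0 <= (v2-v1)*(F2-F1)) by (apply Rmult_le_pos; nra).
assert (P6 : 0 <= (u2-u1)*(G2-G1)) by (apply Rmult_le_pos; nra).
assert (a1 := Rmin_l (v2*F1) (u1*G2)). assert (a2 := Rmin_r (v2*F1) (u1*G2)).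
assert (b1 := Rmin_l (v1*F2) (u2*G1)). assert (b2 := Rmin_r (v1*F2) (u2*G1)).
set (m12 := Rmin (v2*F1) (u1*G2)) in *. set (m21 := Rmin (v1*F2) (u2*G1)) in *.
destruct (Rle_dec (v2*F2) (u2*G2)) as [h22|h22];
 [rewrite (Rmin_left (v2*F2)) by lra | rewrite (Rmin_right (v2*F2)) by lra];
destruct (Rle_dec (v1*F1) (u1*G1)) as [h11|h11];
 try rewrite (Rmin_left (v1*F1)) by lra; try rewrite (Rmin_right (v1*F1)) by lra.
- lra.
- apply Rnot_le_lt in h11.
  destruct (Req_dec v1 0) as [e|Hv].
  + subst v1. assert (v2*F1 <= v2*F2) by nra. nra.
  + assert (Q : 0 <= (v2-v1)*(v1*F1-u1*G1)) by (apply Rmult_le_pos; lra).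
    assert (v1 * (v2*F2 - u1*G2 - v1*F2 + u1*G1) >= 0) by lra.
    assert (0 < v1) by lra.
    assert (v2*F2 - u1*G2 - v1*F2 + u1*G1 >= 0) by nra. lra.
- apply Rnot_le_lt in h22.
  destruct (Req_dec u1 0) as [e|Hu].
  + subst u1. assert (u2*G1 <= u2*G2) by nra. nra.
  + assert (Q : 0 <= (u2-u1)*(u1*G1-v1*F1)) by (apply Rmult_le_pos; lra).
    assert (u1 * (u2*G2 - u1*G2 - v1*F2 + v1*F1) >= 0) by lra.
    assert (0 < u1) by lra.
    assert (u2*G2 - u1*G2 - v1*F2 + v1*F1 >= 0) by nra. lra.
- lra.
Qed.

Lemma adm_facts f : admissible f ->
  (forall u, in01 u -> 0 <= f u <= 1 /\ u <= f u) /\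
  (forall x y, in01 x -> in01 y -> x <= y -> x * f y <= y * f x).
Proof.
intros [H1 [[H20 H21] H3]]. split.
- intros u Hu. unfold in01 in *.
  assert (0 <= f u) by (rewrite <- H20; apply H1; unfold in01; lra).
  assert (f u <= 1) by (rewrite <- H21; apply H1; unfold in01; lra).
  repeat split; try lra.
  destruct (Req_dec u 0) as [->|Hu0]; [lra|].
  assert (h := H3 u 1 ltac:(lra) ltac:(lra) ltac:(lra)).
  rewrite H21 in h. unfold Rdiv in h. rewrite Rinv_1, Rmult_1_l in h.
  apply (Rmult_le_compat_l u) in h; [|lra].
  rewrite <- Rmult_assoc, (Rmult_comm u (f u)), Rmult_assoc, Rinv_r in h; lra.
- intros x y Hx Hy Hxy. unfold in01 in *.
  destruct (Req_dec x 0) as [->|Hx0].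
  + assert (0 <= f y) by (rewrite <- H20; apply H1; unfold in01; lra). nra.
  + assert (h := H3 x y ltac:(lra) Hxy ltac:(lra)).
    unfold Rdiv in h.
    apply (Rmult_le_compat_l (x*y)) in h; [|nra].
    replace (x*y*(f y * / y)) with (x * f y * (y * / y)) in h by ring.
    replace (x*y*(f x * / x)) with (y * f x * (x * / x)) in h by ring.
    rewrite !Rinv_r in h; lra.
Qed.

Lemma CM_eq phi psi u v : admissible phi -> admissible psi -> in01 u -> in01 v ->
  CM phi psi u v = Rmin (v * phi u) (u * psi v).
Proof.
intros Ha Hb Hu Hv. unfold CM.
destruct Ha as [_ [[H0 _] _]]. destruct Hb as [_ [[K0 _] _]].
unfold in01 in *.
destruct (Rlt_dec 0 (u*v)) as [h|h].
- assert (0 < u) by nra. assert (0 < v) by nra.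
  unfold Rmin. destruct (Rle_dec (phi u / u) (psi v / v)) as [d|d];
  destruct (Rle_dec (v * phi u) (u * psi v)) as [e|e]; unfold Rdiv in *.
  + field; lra.
  + exfalso. apply e. apply (Rmult_le_compat_l (u*v)) in d; [|lra].
    replace (u*v*(phi u * /u)) with (v*phi u * (u*/u)) in d by ring.
    replace (u*v*(psi v * /v)) with (u*psi v * (v*/v)) in d by ring.
    rewrite !Rinv_r in d; lra.
  + exfalso. apply d. apply (Rmult_le_compat_l (/u * /v)) in e.
    2: { apply Rlt_le, Rmult_lt_0_compat; apply Rinv_0_lt_compat; lra. }
    replace (/u*/v*(v*phi u)) with (phi u * / u * (v * / v)) in e by ring.
    replace (/u*/v*(u*psi v)) with (psi v * / v * (u * / u)) in e by ring.
    rewrite !Rinv_r in e; lra.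
  + field; lra.
- assert (u = 0 \/ v = 0) as [->| ->] by nra.
  + rewrite H0. unfold Rmin. destruct Rle_dec; lra.
  + rewrite K0. unfold Rmin. destruct Rle_dec; lra.
Qed.

Lemma CM_copula phi psi : admissible phi -> admissible psi -> is_copula (CM phi psi).
Proof.
intros Ha Hb.
destruct (adm_facts _ Ha) as [A1 A2]. destruct (adm_facts _ Hb) as [B1 B2].
assert (Pa := Ha). destruct Pa as [Pa1 [[Pa0 Pa1'] _]].
assert (Pb := Hb). destruct Pb as [Pb1 [[Pb0 Pb1'] _]].
assert (I0 : in01 0) by (unfold in01; lra). assert (I1 : in01 1) by (unfold in01; lra).
split; [split|].
- intros u v Hu Hv. rewrite CM_eq by assumption.
  destruct (A1 u Hu). destruct (B1 v Hv). unfold in01 in *.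
  unfold Rmin; destruct Rle_dec; split; nra.
- intros u Hu. rewrite !CM_eq by assumption.
  destruct (A1 u Hu). destruct (B1 u Hu). unfold in01 in *.
  rewrite Pa0, Pb0, Pa1', Pb1'.
  unfold Rmin; repeat split; repeat destruct Rle_dec; lra.
- intros u1 u2 v1 v2 Hu1 Hu2 Hv1 Hv2 Hu Hv. rewrite !CM_eq by assumption.
  destruct (A1 u1 Hu1). destruct (A1 u2 Hu2). destruct (B1 v1 Hv1). destruct (B1 v2 Hv2).
  unfold in01 in *.
  apply key; try lra.
  + apply Pa1; unfold in01; lra.
  + apply Pb1; unfold in01; lra.
  + apply A2; unfold in01; lra.
  + apply B2; unfold in01; lra.
Qed.

Theorem corollary2 (phil phiu psil psiu : R -> R) :
  admissible phil -> admissible phiu -> admissible psil -> admissible psiu ->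
  (forall x, in01 x -> phil x <= phiu x) ->
  (forall x, in01 x -> psil x <= psiu x) ->
  is_imprecise_copula (CM phil psil) (CM phiu psiu) /\
  coherent (CM phil psil) (CM phiu psiu).
Proof.
intros Hl Hu Kl Ku Hphi Hpsi.
assert (Cl := CM_copula _ _ Hl Kl). assert (Cu := CM_copula _ _ Hu Ku).
assert (LE : forall u v, in01 u -> in01 v -> CM phil psil u v <= CM phiu psiu u v).
{ intros u v Hu' Hv'. rewrite !CM_eq by assumption.
  assert (h1 := Hphi u Hu'). assert (h2 := Hpsi v Hv'). unfold in01 in *.
  assert (v * phil u <= v * phiu u) by nra. assert (u * psil v <= u * psiu v) by nra.
  unfold Rmin; repeat destruct Rle_dec; lra. }
split.
- destruct Cl as [Bl Rl]. destruct Cu as [Bu Ru]. split; [|split]; try assumption.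
  intros u1 u2 v1 v2 H1 H2 H3 H4 H5 H6.
  assert (r1 := Rl u1 u2 v1 v2 H1 H2 H3 H4 H5 H6).
  assert (r2 := Ru u1 u2 v1 v2 H1 H2 H3 H4 H5 H6).
  assert (e1 := LE u1 v1 H1 H3). assert (e2 := LE u1 v2 H1 H4).
  assert (e3 := LE u2 v1 H2 H3). assert (e4 := LE u2 v2 H2 H4).
  repeat split; lra.
- intros u v Hu' Hv'. split; split.
  + intros y [C [[_ HC] ->]]. apply (HC u v Hu' Hv').
  + intros b Hb. apply Hb. exists (CM phil psil). split; [|reflexivity].
    split; [assumption|]. intros; split; [lra|]. apply LE; assumption.
  + intros y [C [[_ HC] ->]]. apply (HC u v Hu' Hv').
  + intros b Hb. apply Hb. exists (CM phiu psiu). split; [|reflexivity].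
    split; [assumption|]. intros; split; [|lra]. apply LE; assumption.
Qed.
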